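(* Let $G$ be a graph on $n$ vertices that is not isomorphic to any of $K_n$, $\overline{K_n}$, $K_{a,n-a}$, or $\overline{K_{a,n-a}}$ for any integer $1\le a\le\lfloor n/2\rfloor$. Then \[ \operatorname{rank}(A_G+I)\cdot\operatorname{rank}(A_{\overline G}+I)\ \ge\ 3(n-1). \]
   Context: All graphs are simple (undirected, no loops or multiple edges). $A_G$ denotes the $n\times n$ adjacency matrix of $G$, $\overline{G}$ the complement of $G$, $I=I_n$ the $n\times n$ identity matrix, and $\operatorname{rank}$ is the rank over $\mathbb{R}$. $K_n$ is the complete graph on $n$ vertices, $\overline{K_n}$ the edgeless graph on $n$ vertices, and $K_{a,b}$ the complete bipartite graph with part sizes $a$ and $b$. *)

(* Defs.v *)
From mathcomp Require Import all_boot all_order all_algebra all_fingroup.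
Set Implicit Arguments. Unset Strict Implicit. Unset Printing Implicit Defensive.
Import GRing.Theory Num.Theory.
Local Open Scope ring_scope.

Definition simple_graph (n : nat) (e : rel 'I_n) : Prop :=
  symmetric e /\ irreflexive e.

Definition compl_graph (n : nat) (e : rel 'I_n) : rel 'I_n :=
  fun x y => (x != y) && ~~ e x y.

Definition adj_mx (R : nzRingType) (n : nat) (e : rel 'I_n) : 'M[R]_n :=
  \matrix_(i, j) (e i j)%:R.

Definition graph_iso (n : nat) (e1 e2 : rel 'I_n) : Prop :=
  exists s : 'S_n, forall x y, e1 x y = e2 (s x) (s y).

Definition complete_graph (n : nat) : rel 'I_n := fun x y => x != y.
Definition empty_graph (n : nat) : rel 'I_n := fun _ _ => false.

Definition complete_bipartite (n a : nat) : rel 'I_n :=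
  fun x y => (x < a)%N != (y < a)%N.

Arguments complete_graph n : clear implicits.
Arguments empty_graph n : clear implicits.
Arguments complete_bipartite n a : clear implicits.

(* Main.v *)
Require Import Defs.
From mathcomp Require Import all_boot all_order all_algebra all_fingroup.
From mathcomp Require Import ring lra zify.
Set Implicit Arguments. Unset Strict Implicit. Unset Printing Implicit Defensive.
Import Order.TTheory GRing.Theory Num.Theory.
Lemma exists_perm_set n (S : {set 'I_n}) :
  exists s : 'S_n, forall x, (s x < #|S|)%N = (x \in S).
Proof.
set L := enum S ++ enum (~: S).
have memL : forall x, x \in L by move=> x; rewrite mem_cat !mem_enum in_setC; case: (x \in S).
have szL : size L = n by rewrite size_cat -!cardE cardsC card_ord.
have lt : forall x, (index x L < n)%N.
  by move=> x; have := index_mem x L; rewrite szL memL.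
pose g x := Ordinal (lt x).
have ginj : injective g.
  move=> x y [] h; by rewrite -(nth_index x (memL x)) h nth_index.
exists (perm ginj) => x; rewrite permE /= /L index_cat mem_enum.
case: ifP => hx; first by rewrite cardE index_mem mem_enum hx.
by rewrite cardE leqNgt ltnS leq_addr.
Qed.

Definition P3b n (e : rel 'I_n) : bool :=
  [exists u, [exists v, [exists w, [&& e u v, e v w, ~~ e u w & u != w]]]].
Definition I3b n (e : rel 'I_n) : bool :=
  [exists u, [exists v, [exists w,
     [&& u != v, v != w, u != w & [&& ~~ e u v, ~~ e v w & ~~ e u w]]]]].

Lemma P3free n (e : rel 'I_n) : ~~ P3b e ->
  forall u v w, e u v -> e v w -> u != w -> e u w.
Proof.
move=> h u v w h1 h2 h3; apply/negPn/negP => h4; move/negP: h; apply.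
by apply/existsP; exists u; apply/existsP; exists v; apply/existsP; exists w; rewrite h1 h2 h4 h3.
Qed.

Lemma I3free n (e : rel 'I_n) : ~~ I3b e ->
  forall u v w, u != v -> v != w -> u != w -> ~~ e u v -> ~~ e v w -> e u w.
Proof.
move=> h u v w h1 h2 h3 h4 h5; apply/negPn/negP => h6; move/negP: h; apply.
by apply/existsP; exists u; apply/existsP; exists v; apply/existsP; exists w; rewrite h1 h2 h3 h4 h5 h6.
Qed.

Lemma lemmaL n (e : rel 'I_n) : simple_graph e -> ~~ P3b e -> ~~ I3b e ->
  graph_iso e (complete_graph n) \/
  exists a, (1 <= a <= n./2)%N /\ graph_iso e (compl_graph (complete_bipartite n a)).
Proof.
move=> [esym eirr] hP hI.
have tr := P3free hP; have ind := I3free hI.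
have [allE|] := boolP [forall x, forall y, (x != y) ==> e x y].
  left; exists 1%g => x y; rewrite !perm1 /complete_graph.
  have [->|nxy] := eqVneq x y; first by rewrite eirr.
  by move/forallP: allE => /(_ x) /forallP /(_ y); rewrite nxy.
rewrite negb_forall => /existsP [p]; rewrite negb_forall => /existsP [q].
rewrite negb_imply => /andP [npq epq].
right.
set A := [set x | (x == p) || e p x].
have relA : forall x y, x \in A -> y \in A -> x != y -> e x y.
  move=> x y; rewrite !inE => /orP [/eqP ->|hx] /orP [/eqP ->|hy] nxy.
  - by rewrite eqxx in nxy.
  - exact: hy.
  - by rewrite esym.
  - by apply: (tr x p y) => //; rewrite esym.
have notA : forall x, x \notin A -> (x == q) || e q x.
  move=> x; rewrite inE negb_or => /andP [nxp nepx].
  have [->|nxq] := eqVneq x q; first by [].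
  apply/orP; right; rewrite esym; apply: (ind x p q) => //.
  - by rewrite esym.
have relB : forall x y, x \notin A -> y \notin A -> x != y -> e x y.
  move=> x y /notA /orP [/eqP ->|hx] /notA /orP [/eqP ->|hy] nxy.
  - by rewrite eqxx in nxy.
  - exact: hy.
  - by rewrite esym.
  - by apply: (tr x q y) => //; rewrite esym.
have cross : forall x y, x \in A -> y \notin A -> ~~ e x y.
  move=> x y hx hy; apply/negP => exy; move/negP: hy; apply.
  move: hx; rewrite !inE => /orP [/eqP <-|hx]; first by rewrite exy orbT.
  have [->|npy] := eqVneq p y; first by [].
  by rewrite /= (tr p x y).
have pA : p \in A by rewrite inE eqxx.
have qA : q \notin A by rewrite inE negb_or eq_sym npq.
have key : forall x y, e x y = (x != y) && ((x \in A) == (y \in A)).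
  move=> x y; have [->|nxy] := eqVneq x y; first by rewrite eirr.
  case: (boolP (x \in A)) => hx; case: (boolP (y \in A)) => hy /=.
  - exact: relA.
  - exact: negbTE (cross _ _ hx hy).
  - by rewrite esym; exact: negbTE (cross _ _ hy hx).
  - exact: relB.
have cA1 : (1 <= #|A|)%N by rewrite card_gt0; apply/set0Pn; exists p.
have cA2 : (#|A| < n)%N.
  have hc := cardsC A; rewrite card_ord in hc.
  have : (0 < #|~: A|)%N by rewrite card_gt0; apply/set0Pn; exists q; rewrite inE.
  lia.
have hn := odd_double_half n.
set S := if (#|A| <= n./2)%N then A else ~: A.
have memS : forall x y, ((x \in S) == (y \in S)) = ((x \in A) == (y \in A)).
  move=> x y; rewrite /S; case: ifP => _ //; rewrite !in_setC.
  by case: (x \in A); case: (y \in A).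
have cS : (1 <= #|S| <= n./2)%N.
  have hc := cardsC A; rewrite card_ord in hc.
  rewrite /S; case: ifP => h; first by rewrite cA1 h.
  move/negbT: h; rewrite -ltnNge => h; apply/andP; split; lia.
exists #|S|; split => //.
have [s hs] := exists_perm_set S.
exists s => x y; rewrite key /compl_graph /complete_bipartite !hs.
rewrite (inj_eq perm_inj) -memS.
by case: (x \in S); case: (y \in S).
Qed.

Local Open Scope ring_scope.

Definition bf (R : realFieldType) (n : nat) (M : 'M[R]_n) (u v : 'rV[R]_n) : R :=
  (u *m M *m v^T) 0 0.

Lemma bfE (R : realFieldType) n (M : 'M[R]_n) u v :
  bf M u v = \sum_i \sum_j u 0 i * M i j * v 0 j.
Proof.
rewrite /bf [LHS]mxE.
under eq_bigr => k _ do rewrite mxE big_distrl /=.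
rewrite exchange_big /=; apply: eq_bigr => i _; apply: eq_bigr => j _.
by rewrite !mxE.
Qed.

Lemma bfDl (R : realFieldType) n (M : 'M[R]_n) u u' v : bf M (u + u') v = bf M u v + bf M u' v.
Proof. by rewrite /bf !mulmxDl mxE. Qed.
Lemma bfDr (R : realFieldType) n (M : 'M[R]_n) u v v' : bf M u (v + v') = bf M u v + bf M u v'.
Proof. by rewrite /bf linearD /= mulmxDr mxE. Qed.
Lemma bfZl (R : realFieldType) n (M : 'M[R]_n) a u v : bf M (a *: u) v = a * bf M u v.
Proof. by rewrite /bf -!scalemxAl mxE. Qed.
Lemma bfZr (R : realFieldType) n (M : 'M[R]_n) a u v : bf M u (a *: v) = a * bf M u v.
Proof. by rewrite /bf linearZ /= -!scalemxAr mxE. Qed.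
Lemma bfNl (R : realFieldType) n (M : 'M[R]_n) u v : bf M (- u) v = - bf M u v.
Proof. by rewrite -scaleN1r bfZl mulN1r. Qed.
Lemma bfNr (R : realFieldType) n (M : 'M[R]_n) u v : bf M u (- v) = - bf M u v.
Proof. by rewrite -scaleN1r bfZr mulN1r. Qed.
Lemma bfBl (R : realFieldType) n (M : 'M[R]_n) u u' v : bf M (u - u') v = bf M u v - bf M u' v.
Proof. by rewrite bfDl bfNl. Qed.
Lemma bfBr (R : realFieldType) n (M : 'M[R]_n) u v v' : bf M u (v - v') = bf M u v - bf M u v'.
Proof. by rewrite bfDr bfNr. Qed.
Lemma bf0l (R : realFieldType) n (M : 'M[R]_n) v : bf M 0 v = 0.
Proof. by rewrite /bf !mul0mx mxE. Qed.
Lemma bf0r (R : realFieldType) n (M : 'M[R]_n) v : bf M v 0 = 0.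
Proof. by rewrite /bf linear0 mulmx0 mxE. Qed.
Lemma bfMD (R : realFieldType) n (M N : 'M[R]_n) u v : bf (M + N) u v = bf M u v + bf N u v.
Proof. by rewrite /bf mulmxDr mulmxDl mxE. Qed.
Lemma bf_sym (R : realFieldType) n (M : 'M[R]_n) u v : M^T = M -> bf M u v = bf M v u.
Proof.
move=> sM; rewrite /bf.
have -> : (u *m M *m v^T) 0 0 = ((u *m M *m v^T)^T) 0 0 by rewrite [RHS]mxE.
by rewrite !trmx_mul trmxK sM mulmxA.
Qed.

Lemma bf_ker (R : realFieldType) n (M : 'M[R]_n) u v : u *m M = 0 -> bf M u v = 0.
Proof. by move=> h; rewrite /bf h mul0mx mxE. Qed.

Lemma bf_delta (R : realFieldType) n (M : 'M[R]_n) i j :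
  bf M (delta_mx 0 i) (delta_mx 0 j) = M i j.
Proof.
by rewrite /bf trmx_delta -rowE -colE !mxE.
Qed.


Definition Wm (R : realFieldType) (n : nat) : 'M[R]_n := const_mx 1 + 1%:M.

Lemma WmE (R : realFieldType) n i j : Wm R n i j = 1 + (i == j)%:R.
Proof. by rewrite !mxE. Qed.

Lemma mulWm (R : realFieldType) n (y : 'rV[R]_n) j :
  (y *m Wm R n) 0 j = \sum_i y 0 i + y 0 j.
Proof.
rewrite mxE; under eq_bigr => i _ do rewrite WmE mulrDr mulr1.
rewrite big_split /=; congr (_ + _).
rewrite (bigD1 j) //= eqxx mulr1 big1 ?addr0 // => i /negbTE ->; by rewrite mulr0.
Qed.

Lemma bfWE (R : realFieldType) n (u : 'rV[R]_n) :
  bf (Wm R n) u u = (\sum_i u 0 i) ^+ 2 + \sum_i (u 0 i) ^+ 2.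
Proof.
rewrite bfE.
have -> : \sum_i \sum_j u 0 i * Wm R n i j * u 0 j =
   \sum_i u 0 i * (\sum_j u 0 j) + \sum_i u 0 i * u 0 i.
  rewrite -big_split /=; apply: eq_bigr => i _.
  under eq_bigr => j _ do rewrite WmE mulrDr mulr1 mulrDl.
  rewrite big_split /= big_distrr /=; congr (_ + _).
  rewrite (bigD1 i) //= eqxx mulr1 big1 ?addr0 // => j /negbTE.
  by rewrite eq_sym => ->; rewrite mulr0 mul0r.
by rewrite -big_distrl /= expr2; congr (_ + _); apply: eq_bigr => i _; rewrite expr2.
Qed.

Lemma bfW_ge0 (R : realFieldType) n (u : 'rV[R]_n) : 0 <= bf (Wm R n) u u.
Proof.
rewrite bfWE addr_ge0 ?sqr_ge0 //; apply: sumr_ge0 => i _; exact: sqr_ge0.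
Qed.

Lemma bfW_eq0 (R : realFieldType) n (u : 'rV[R]_n) : bf (Wm R n) u u = 0 -> u = 0.
Proof.
rewrite bfWE => h.
have h2 : \sum_i (u 0 i) ^+ 2 = 0.
  apply/eqP; rewrite eq_le sumr_ge0 ?andbT; last by move=> i _; exact: sqr_ge0.
  by rewrite -[leRHS]h; have := sqr_ge0 (\sum_i u 0 i); lra.
apply/matrixP => i j; rewrite (ord1 i) mxE.
have := psumr_eq0P (fun i _ => sqr_ge0 (u 0 i)) h2 (i := j) isT.
by move/eqP; rewrite sqrf_eq0 => /eqP.
Qed.

Lemma decompU (R : realFieldType) n (X Y : 'M[R]_n) (k : 'rV[R]_n) :
  (k <= kermx X + kermx Y)%MS ->
  exists a b, [/\ a *m X = 0, b *m Y = 0 & k = a + b].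
Proof.
case/sub_addsmxP => [[u1 u2]] /= ->; exists (u1 *m kermx X), (u2 *m kermx Y).
by split=> //; apply/sub_kermxP; exact: submxMl.
Qed.

Lemma orth_ker (R : realFieldType) n (U : 'M[R]_n) (y : 'rV[R]_n) :
  (forall k : 'rV[R]_n, (k <= U)%MS -> (y *m k^T) 0 0 = 0) ->
  (y <= kermx U^T)%MS.
Proof.
move=> H; apply/sub_kermxP; apply/matrixP => i j; rewrite (ord1 i) [RHS]mxE.
rewrite -(H (row j U) (row_sub j U)) !mxE.
by apply: eq_bigr => l _; rewrite !mxE.
Qed.

Lemma bf_W_mul (R : realFieldType) n (z k : 'rV[R]_n) :
  bf (Wm R n) z k = ((z *m Wm R n) *m k^T) 0 0.
Proof. by []. Qed.

Lemma core_decomp (R : realFieldType) n (X Y : 'M[R]_n) :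
  X^T = X -> Y^T = Y -> X + Y = Wm R n ->
  (\rank X + \rank Y <= n.+1)%N ->
  exists z : 'rV[R]_n, exists lam : R,
    [/\ z *m X = lam *: (z *m Wm R n),
        (forall a, a *m X = 0 -> bf (Wm R n) z a = 0),
        (forall b, b *m Y = 0 -> bf (Wm R n) z b = 0) &
        (forall v, exists a, exists b, exists al,
            [/\ a *m X = 0, b *m Y = 0 & v = a + b + al *: z])].
Proof.
move=> sX sY XYW rk.
set U := (kermx X + kermx Y)%MS.
have capU : (kermx X :&: kermx Y)%MS = 0.
  apply/eqP; rewrite -submx0; apply/rV_subP => u; rewrite sub_capmx.
  case/andP => /sub_kermxP hx /sub_kermxP hy.
  have : bf (Wm R n) u u = 0.
    by rewrite -XYW bfMD (bf_ker _ hx) (bf_ker _ hy) addr0.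
  by move/bfW_eq0 => ->; rewrite sub0mx.
have rkU : \rank U = ((n - \rank X) + (n - \rank Y))%N.
  by rewrite /U mxrank_disjoint_sum // !mxrank_ker.
have rX := rank_leq_row X; have rY := rank_leq_row Y.
have rkUle : (\rank U <= n)%N by exact: rank_leq_row.
have KU : forall a : 'rV[R]_n, a *m X = 0 -> (a <= U)%MS.
  move=> a ha; apply: (submx_trans _ (addsmxSl (kermx X) (kermx Y))); exact/sub_kermxP.
have KU' : forall b : 'rV[R]_n, b *m Y = 0 -> (b <= U)%MS.
  move=> b hb; apply: (submx_trans _ (addsmxSr (kermx X) (kermx Y))); exact/sub_kermxP.
have [full|nfull] := eqVneq (\rank U) n.
  exists 0, 0; split.
  - by rewrite mul0mx scale0r.
  - by move=> a _; rewrite bf0l.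
  - by move=> b _; rewrite bf0l.
  move=> v; have : (v <= U)%MS by apply: submx_full; rewrite /row_full full.
  case/decompU => a [b [ha hb ->]]; exists a, b, 0.
  by rewrite scale0r addr0.
have rkU1 : \rank U = n.-1 by lia.
have n0 : (0 < n)%N by lia.
set A := kermx U^T.
have rkA : \rank A = 1%N by rewrite /A mxrank_ker mxrank_tr rkU1; lia.
set w := nz_row A.
have wA : (w <= A)%MS by exact: nz_row_sub.
have w0 : w != 0.
  rewrite /w nz_row_eq0; apply/eqP => A0; move: rkA; rewrite A0 mxrank0 //.
set S := \sum_i w 0 i.
set z := \row_j (w 0 j - S / n.+1%:R).
have zW : z *m Wm R n = w.
  apply/matrixP => i j; rewrite (ord1 i) mulWm.
  have -> : \sum_i0 z 0 i0 = S - n%:R * (S / n.+1%:R).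
    rewrite /z; under eq_bigr => i0 _ do rewrite mxE.
    by rewrite sumrB sumr_const card_ord mulr_natl.
  rewrite mxE; have nz : n.+1%:R != 0 :> R by rewrite pnatr_eq0.
  rewrite -[in LHS](mulr1 S) -(divff nz) /= mulrA.
  rewrite -natr1; field; by rewrite natr1.
have orth : forall k : 'rV[R]_n, (k <= U)%MS -> bf (Wm R n) z k = 0.
  move=> k; case/submxP => D ->; rewrite bf_W_mul zW trmx_mul mulmxA.
  by have /sub_kermxP -> := wA; rewrite mul0mx mxE.
have zXA : (z *m X <= A)%MS.
  apply: orth_ker => k; case/decompU => a [b [ha hb ->]].
  rewrite linearD /= mulmxDr mxE.
  have e1 : ((z *m X) *m a^T) 0 0 = bf X z a by [].
  have e2 : ((z *m X) *m b^T) 0 0 = bf X z b by [].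
  rewrite e1 e2 (bf_sym _ _ sX) (bf_ker _ ha) add0r (bf_sym _ _ sX).
  have -> : X = Wm R n - Y by rewrite -XYW addrK.
  rewrite /bf mulmxBr mulmxBl hb mul0mx subr0 -/(bf (Wm R n) b z).
  rewrite bf_sym; last by rewrite /Wm linearD /= trmx_const trmx1.
  exact/orth/KU'.
have Aw : (A <= w)%MS.
  have := mxrank_leqif_sup wA; rewrite rank_rV w0 rkA /= => /leqif_refl.
  by move=> ->.
have [lam hlam] : exists lam, z *m X = lam *: w by apply/sub_rVP; exact: submx_trans zXA Aw.
exists z, lam; split.
- by rewrite hlam zW.
- by move=> a /KU /orth.
- by move=> b /KU' /orth.
have zU : ~~ (z <= U)%MS.
  apply/negP => /orth; move/bfW_eq0 => z0; move: w0; by rewrite -zW z0 mul0mx eqxx.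
have full : row_full (U + z)%MS.
  have h := mxrank_leqif_sup (addsmxSl U z).
  have ne : ~~ (U + z <= U)%MS.
    by apply: contra zU => /(submx_trans (addsmxSr U z)).
  have lt : (\rank U < \rank (U + z)%MS)%N by rewrite (ltn_leqif h).
  have := rank_leq_row (U + z)%MS; rewrite /row_full; lia.
move=> v; have := submx_full v full; case/sub_addsmxP => [[y1 y2]] /= ->.
have : (y1 *m U <= U)%MS by exact: submxMl.
case/decompU => a [b [ha hb ->]].
have : (y2 *m z <= z)%MS by exact: submxMl.
case/sub_rVP => al ->; by exists a, b, al.
Qed.

Lemma Wm_sym (R : realFieldType) n : (Wm R n)^T = Wm R n.
Proof. by rewrite /Wm linearD /= trmx_const trmx1. Qed.

Lemma bf_eig (R : realFieldType) n (X : 'M[R]_n) z lam v :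
  z *m X = lam *: (z *m Wm R n) -> bf X z v = lam * bf (Wm R n) z v.
Proof. by move=> h; rewrite /bf h -scalemxAl mxE. Qed.

Lemma quad_form (R : realFieldType) n (X Y : 'M[R]_n) z lam a b al :
  X^T = X -> Y^T = Y -> X + Y = Wm R n ->
  z *m X = lam *: (z *m Wm R n) ->
  (forall a, a *m X = 0 -> bf (Wm R n) z a = 0) ->
  (forall b, b *m Y = 0 -> bf (Wm R n) z b = 0) ->
  a *m X = 0 -> b *m Y = 0 ->
  bf X (a + b + al *: z) (a + b + al *: z) =
     bf (Wm R n) b b + al ^+ 2 * lam * bf (Wm R n) z z /\
  bf Y (a + b + al *: z) (a + b + al *: z) =
     bf (Wm R n) a a + al ^+ 2 * (1 - lam) * bf (Wm R n) z z.
Proof.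
move=> sX sY XYW hz oa ob ha hb.
have zY : z *m Y = (1 - lam) *: (z *m Wm R n).
  have -> : Y = Wm R n - X by rewrite -XYW addrAC subrr add0r.
  by rewrite mulmxBr hz scalerBl scale1r.
have sW := Wm_sym R n.
have Xa : forall v, bf X a v = 0 by move=> v; exact: bf_ker.
have Xa' : forall v, bf X v a = 0 by move=> v; rewrite (bf_sym _ _ sX) Xa.
have Yb : forall v, bf Y b v = 0 by move=> v; exact: bf_ker.
have Yb' : forall v, bf Y v b = 0 by move=> v; rewrite (bf_sym _ _ sY) Yb.
have Xbb : bf X b b = bf (Wm R n) b b by rewrite -XYW bfMD Yb addr0.
have Yaa : bf Y a a = bf (Wm R n) a a by rewrite -XYW bfMD Xa add0r.
have Xzb : bf X z b = 0 by rewrite (bf_eig _ hz) ob // mulr0.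
have Xbz : bf X b z = 0 by rewrite (bf_sym _ _ sX) Xzb.
have Yza : bf Y z a = 0 by rewrite (bf_eig _ zY) oa // mulr0.
have Yaz : bf Y a z = 0 by rewrite (bf_sym _ _ sY) Yza.
have Xzz : bf X z z = lam * bf (Wm R n) z z by rewrite (bf_eig _ hz).
have Yzz : bf Y z z = (1 - lam) * bf (Wm R n) z z by rewrite (bf_eig _ zY).
split; rewrite !bfDl !bfDr !bfZl !bfZr.
  by rewrite !Xa !Xa' Xbb Xzb Xbz Xzz; ring.
by rewrite !Yb !Yb' Yaa Yza Yaz Yzz; ring.
Qed.

Lemma rank_caseA (R : realFieldType) n (X Y : 'M[R]_n) s t :
  X^T = X -> Y^T = Y -> X + Y = Wm R n ->
  bf X s s < 0 -> bf Y t t < 0 -> (n.+2 <= \rank X + \rank Y)%N.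
Proof.
move=> sX sY XYW hs ht; rewrite leqNgt; apply/negP; rewrite ltnS => rk.
have [z [lam [hz oa ob dec]]] := core_decomp sX sY XYW rk.
have [a [b [al [ha hb ds]]]] := dec s.
have [a' [b' [al' [ha' hb' dt]]]] := dec t.
have [qs _] := quad_form al sX sY XYW hz oa ob ha hb.
have [_ qt] := quad_form al' sX sY XYW hz oa ob ha' hb'.
move: hs ht; rewrite ds qs dt qt.
have := bfW_ge0 b; have := bfW_ge0 a'; have := bfW_ge0 z.
set c := bf (Wm R n) z z => c0 h1 h2 hs ht.
have p0 : 0 <= al ^+ 2 * c by rewrite mulr_ge0 ?sqr_ge0.
have q0 : 0 <= al' ^+ 2 * c by rewrite mulr_ge0 ?sqr_ge0.
have e1 : al ^+ 2 * lam * c = (al ^+ 2 * c) * lam by ring.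
have e2 : al' ^+ 2 * (1 - lam) * c = (al' ^+ 2 * c) * (1 - lam) by ring.
rewrite e1 in hs; rewrite e2 in ht.
have [l0|l0] := lerP 0 lam.
  by have := mulr_ge0 p0 l0; lra.
have : 0 <= 1 - lam by lra.
by move/(mulr_ge0 q0); lra.
Qed.

Lemma rank_caseB (R : realFieldType) n (X Y : 'M[R]_n) (q : 'I_n) t :
  X^T = X -> Y^T = Y -> X + Y = Wm R n ->
  (delta_mx 0 q : 'rV[R]_n) *m X = delta_mx 0 q -> bf Y t t < 0 ->
  (n.+2 <= \rank X + \rank Y)%N.
Proof.
move=> sX sY XYW hq ht; rewrite leqNgt; apply/negP; rewrite ltnS => rk.
have [z [lam [hz oa ob dec]]] := core_decomp sX sY XYW rk.
set eq := (delta_mx 0 q : 'rV[R]_n) in hq *.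
have [a [b [al [ha hb ds]]]] := dec eq.
have [a' [b' [al' [ha' hb' dt]]]] := dec t.
have [qs _] := quad_form al sX sY XYW hz oa ob ha hb.
have [_ qt] := quad_form al' sX sY XYW hz oa ob ha' hb'.
have sW := Wm_sym R n.
set beta := b + (al * lam) *: z.
have bW : b *m Wm R n = b *m X by rewrite -XYW mulmxDr hb addr0.
have betaW : beta *m Wm R n = eq.
  rewrite /beta mulmxDl bW -scalemxAl -scalerA -hz scalemxAl -mulmxDl.
  by rewrite -[RHS]hq ds !mulmxDl ha add0r.
have Bb : bf (Wm R n) beta beta = bf (Wm R n) b b + (al * lam) ^+ 2 * bf (Wm R n) z z.
  by rewrite /beta !bfDl !bfDr !bfZl !bfZr (bf_sym _ z sW) (ob b hb); ring.
have Bq : bf (Wm R n) beta beta = beta 0 q.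
  by rewrite /bf betaW /eq -rowE !mxE.
have eqq : eq 0 q = 1 by rewrite /eq mxE !eqxx.
have Xq : bf X eq eq = 1 by rewrite /bf hq /eq -rowE !mxE !eqxx.
have Seq : \sum_i eq 0 i = 1.
  rewrite (bigD1 q) //= eqq big1 ?addr0 // => i /negbTE hi.
  by rewrite /eq mxE hi andbF.
set gamma := eq - beta.
have gj : forall j, gamma 0 j = 1 - \sum_i gamma 0 i.
  move=> j; have h1 := mulWm gamma j.
  have : (gamma *m Wm R n) 0 j = 1.
    by rewrite /gamma mulmxBl betaW mxE mulWm Seq !mxE; ring.
  by rewrite h1 => h; lra.
set S := \sum_i gamma 0 i in gj.
have SS : S = n%:R * (1 - S).
  rewrite {1}/S; under eq_bigr => j _ do rewrite gj.
  by rewrite sumr_const card_ord mulr_natl.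
have g0 : 0 < 1 - S.
  rewrite ltNge; apply/negP => h.
  have : 0 <= (n%:R : R) by exact: ler0n.
  have : S <= 0 by rewrite SS; apply: mulr_ge0_le0 => //; exact: ler0n.
  lra.
have bq : beta 0 q = 1 - (1 - S).
  have : gamma 0 q = 1 - S by exact: gj.
  by rewrite /gamma !mxE !eqxx /= => h; lra.
move: ht; rewrite dt qt.
move: Bb; rewrite Bq bq => Bb.
move: qs; rewrite -ds Xq => qs.
have := bfW_ge0 a'; have := bfW_ge0 z.
set c := bf (Wm R n) z z => c0 h2 ht.
set B := bf (Wm R n) b b in Bb qs.
have p0 : 0 <= al ^+ 2 * c by rewrite mulr_ge0 ?sqr_ge0.
have q0 : 0 <= al' ^+ 2 * c by rewrite mulr_ge0 ?sqr_ge0.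
have e1 : (al ^+ 2 * c) * (lam * (1 - lam)) = 1 - S.
  have : (al * lam) ^+ 2 * c = al ^+ 2 * c * lam ^+ 2 by ring.
  move=> h; rewrite h in Bb; rewrite -/c in qs; rewrite mulrA.
  have -> : al ^+ 2 * c * lam * (1 - lam) = al ^+ 2 * lam * c - al ^+ 2 * c * lam ^+ 2 by ring.
  lra.
have e2 : al' ^+ 2 * (1 - lam) * c = (al' ^+ 2 * c) * (1 - lam) by ring.
rewrite e2 in ht.
have [l1|l1] := lerP lam 1.
  have : 0 <= 1 - lam by lra.
  by move/(mulr_ge0 q0); lra.
have : lam * (1 - lam) <= 0.
  rewrite mulr_ge0_le0 //; lra.
move/(mulr_ge0_le0 p0); lra.
Qed.

Lemma rank_caseC (R : realFieldType) n (X Y : 'M[R]_n) v w :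
  X^T = X -> Y^T = Y -> X + Y = Wm R n ->
  bf Y v v = -4 -> bf Y v w = -2 -> bf Y w w = -2 ->
  (n.+2 <= \rank X + \rank Y)%N.
Proof.
move=> sX sY XYW hvv hvw hww; rewrite leqNgt; apply/negP; rewrite ltnS => rk.
have [z [lam [hz oa ob dec]]] := core_decomp sX sY XYW rk.
have [a1 [b1 [al1 [ha1 hb1 dv]]]] := dec v.
have [a2 [b2 [al2 [ha2 hb2 dw]]]] := dec w.
have hwv : bf Y w v = -2 by rewrite (bf_sym _ _ sY).
set u := al2 *: v - al1 *: w.
have hu : bf Y u u = - 2 * al2 ^+ 2 - 2 * (al2 - al1) ^+ 2.
  rewrite /u !bfBl !bfBr !bfZl !bfZr hvv hvw hwv hww; ring.
have ua : (al2 *: a1 - al1 *: a2) *m X = 0.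
  by rewrite mulmxBl -!scalemxAl ha1 ha2 !scaler0 subrr.
have ub : (al2 *: b1 - al1 *: b2) *m Y = 0.
  by rewrite mulmxBl -!scalemxAl hb1 hb2 !scaler0 subrr.
have ud : u = (al2 *: a1 - al1 *: a2) + (al2 *: b1 - al1 *: b2) + 0 *: z.
  by rewrite /u dv dw; apply/matrixP => i j; rewrite !mxE; ring.
have [_ qu] := quad_form 0 sX sY XYW hz oa ob ua ub.
move: hu; rewrite ud qu expr0n /= mul0r mul0r addr0 => hu.
have := bfW_ge0 (al2 *: a1 - al1 *: a2) => h0.
have s1 : al2 ^+ 2 = 0 /\ (al2 - al1) ^+ 2 = 0.
  have := sqr_ge0 (al2 - al1); have := sqr_ge0 al2; lra.
case: s1 => /eqP; rewrite sqrf_eq0 => /eqP h1 /eqP; rewrite sqrf_eq0 h1 sub0r oppr_eq0 => /eqP h2.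
have [_ qv] := quad_form al1 sX sY XYW hz oa ob ha1 hb1.
move: hvv; rewrite dv qv h2 expr0n /= mul0r mul0r addr0 => hvv.
have := bfW_ge0 a1; lra.
Qed.

Definition sel (R : realFieldType) n (f : 'I_3 -> 'I_n) : 'M[R]_(3, n) :=
  \matrix_(i, j) (j == f i)%:R.

Lemma sel_mul (R : realFieldType) n (f : 'I_3 -> 'I_n) (M : 'M[R]_n) i j :
  (sel R f *m M *m (sel R f)^T) i j = M (f i) (f j).
Proof.
rewrite mxE (bigD1 (f j)) //= big1 ?addr0.
  rewrite !mxE eqxx mulr1 (bigD1 (f i)) //= big1 ?addr0.
    by rewrite mxE eqxx mul1r.
  by move=> k /negbTE hk; rewrite mxE hk mul0r.
by move=> k /negbTE hk; rewrite !mxE hk mulr0.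
Qed.

Lemma rank_sel (R : realFieldType) n (f : 'I_3 -> 'I_n) (M : 'M[R]_n) :
  (\rank (sel R f *m M *m (sel R f)^T) <= \rank M)%N.
Proof.
apply: leq_trans (mxrankM_maxl _ _) _; exact: mxrankM_maxr.
Qed.

Definition f3 n (u v w : 'I_n) (i : 'I_3) : 'I_n := nth u [:: u; v; w] i.

Lemma rank3_P3 (R : realFieldType) n (M : 'M[R]_n) u v w :
  M u u = 1 -> M v v = 1 -> M w w = 1 -> M u v = 1 -> M v u = 1 ->
  M v w = 1 -> M w v = 1 -> M u w = 0 -> M w u = 0 -> (3 <= \rank M)%N.
Proof.
move=> h1 h2 h3 h4 h5 h6 h7 h8 h9.
set N := sel R (f3 u v w) *m M *m (sel R (f3 u v w))^T.
set B : 'M[R]_3 := \matrix_(i, j) (nth 0 (nth [::] [:: [:: 0; 1; -1]; [:: 1; -1; 1]; [:: -1; 1; 0]] i) j).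
have NB : N *m B = 1%:M.
  apply/matrixP => i j; rewrite !mxE !big_ord_recr big_ord0 /= add0r !sel_mul !mxE.
  case: i => [[|[|[|//]]]] ?; case: j => [[|[|[|//]]]] ? /=;
  rewrite /f3 /= ?h1 ?h2 ?h3 ?h4 ?h5 ?h6 ?h7 ?h8 ?h9; ring.
have [uN _] := mulmx1_unit NB.
by have := rank_sel (f3 u v w) M; rewrite -/N (mxrank_unit uN).
Qed.

Lemma rank3_I (R : realFieldType) n (M : 'M[R]_n) u v w :
  M u u = 1 -> M v v = 1 -> M w w = 1 -> M u v = 0 -> M v u = 0 ->
  M v w = 0 -> M w v = 0 -> M u w = 0 -> M w u = 0 -> (3 <= \rank M)%N.
Proof.
move=> h1 h2 h3 h4 h5 h6 h7 h8 h9.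
set N := sel R (f3 u v w) *m M *m (sel R (f3 u v w))^T.
have NB : N *m 1%:M = 1%:M.
  rewrite mulmx1; apply/matrixP => i j; rewrite sel_mul !mxE.
  case: i => [[|[|[|//]]]] ?; case: j => [[|[|[|//]]]] ? /=;
  by rewrite /f3 /= ?h1 ?h2 ?h3 ?h4 ?h5 ?h6 ?h7 ?h8 ?h9.
have [uN _] := mulmx1_unit NB.
by have := rank_sel (f3 u v w) M; rewrite -/N (mxrank_unit uN).
Qed.

Definition Xg (R : realFieldType) n (e : rel 'I_n) : 'M[R]_n := adj_mx R e + 1%:M.

Lemma XgE (R : realFieldType) n (e : rel 'I_n) i j : irreflexive e ->
  Xg R e i j = if i == j then 1 else (e i j)%:R.
Proof.
move=> irr; rewrite !mxE; have [->|nij] := eqVneq i j; first by rewrite irr add0r.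
by rewrite addr0.
Qed.

Lemma compl_simple n (e : rel 'I_n) : simple_graph e -> simple_graph (compl_graph e).
Proof.
move=> [sy irr]; split.
  by move=> x y; rewrite /compl_graph eq_sym sy.
by move=> x; rewrite /compl_graph eqxx.
Qed.

Lemma compl_compl n (e : rel 'I_n) : simple_graph e -> compl_graph (compl_graph e) =2 e.
Proof.
move=> [sy irr] x y; rewrite /compl_graph.
by have [->|nxy] := eqVneq x y; rewrite ?irr //= negbK.
Qed.

Lemma XgCE (R : realFieldType) n (e : rel 'I_n) i j : simple_graph e ->
  Xg R (compl_graph e) i j = (~~ e i j)%:R.
Proof.
move=> [sy irr]; rewrite XgE; last by case: (compl_simple (conj sy irr)).
have [->|nij] := eqVneq i j; first by rewrite irr.
by rewrite /compl_graph nij.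
Qed.

Lemma Xg_sym (R : realFieldType) n (e : rel 'I_n) : symmetric e -> (Xg R e)^T = Xg R e.
Proof.
move=> sy; apply/matrixP => i j; rewrite !mxE sy; congr (_ + _).
by rewrite eq_sym.
Qed.

Lemma Xg_compl2 (R : realFieldType) n (e : rel 'I_n) : simple_graph e ->
  Xg R (compl_graph (compl_graph e)) = Xg R e.
Proof. by move=> se; apply/matrixP => i j; rewrite !mxE (compl_compl se). Qed.

Lemma XY_W (R : realFieldType) n (e : rel 'I_n) : simple_graph e ->
  Xg R e + Xg R (compl_graph e) = Wm R n.
Proof.
move=> se; apply/matrixP => i j; rewrite mxE XgCE // XgE; last by case: se.
rewrite WmE; have [->|nij] := eqVneq i j; first by case: se => _ ->.
by case: (e i j); rewrite /= ?addr0 ?add0r.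
Qed.

Lemma rank3 (R : realFieldType) n (e : rel 'I_n) : simple_graph e ->
  P3b e || I3b e -> (3 <= \rank (Xg R e))%N.
Proof.
move=> [sy irr]; have E := fun i j => XgE R i j irr.
case/orP.
  case/existsP => u /existsP [v /existsP [w /and4P [h1 h2 h3 h4]]].
  have nuv : u != v by apply: contraTneq h1 => ->; rewrite irr.
  have nvw : v != w by apply: contraTneq h2 => ->; rewrite irr.
  apply: (rank3_P3 (u := u) (v := v) (w := w)); rewrite !E ?eqxx //.
  - by rewrite (negbTE nuv) h1.
  - by rewrite eq_sym (negbTE nuv) sy h1.
  - by rewrite (negbTE nvw) h2.
  - by rewrite eq_sym (negbTE nvw) sy h2.
  - by rewrite (negbTE h4) (negbTE h3).
  - by rewrite eq_sym (negbTE h4) sy (negbTE h3).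
case/existsP => u /existsP [v /existsP [w /and4P [h1 h2 h3 /and3P [h4 h5 h6]]]].
apply: (rank3_I (u := u) (v := v) (w := w)); rewrite !E ?eqxx //.
- by rewrite (negbTE h1) (negbTE h4).
- by rewrite eq_sym (negbTE h1) sy (negbTE h4).
- by rewrite (negbTE h2) (negbTE h5).
- by rewrite eq_sym (negbTE h2) sy (negbTE h5).
- by rewrite (negbTE h3) (negbTE h6).
- by rewrite eq_sym (negbTE h3) sy (negbTE h6).
Qed.

Definition ev (R : realFieldType) n (u : 'I_n) : 'rV[R]_n := delta_mx 0 u.

Lemma bf_ev (R : realFieldType) n (M : 'M[R]_n) u v : bf M (ev R u) (ev R v) = M u v.
Proof. exact: bf_delta. Qed.

Lemma negvec (R : realFieldType) n (e : rel 'I_n) : simple_graph e ->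
  P3b e -> exists s, bf (Xg R e) s s < 0.
Proof.
move=> [sy irr]; have E := fun i j => XgE R i j irr.
case/existsP => u /existsP [v /existsP [w /and4P [h1 h2 h3 h4]]].
have nuv : u != v by apply: contraTneq h1 => ->; rewrite irr.
have nvw : v != w by apply: contraTneq h2 => ->; rewrite irr.
exists (ev R u - ev R v + ev R w).
rewrite !bfDl !bfDr !bfNl !bfNr !bf_ev !E !eqxx (negbTE nuv) (negbTE nvw) (negbTE h4).
rewrite [v == u]eq_sym [w == v]eq_sym [w == u]eq_sym (negbTE nuv) (negbTE nvw) (negbTE h4).
rewrite [e v u]sy [e w v]sy [e w u]sy h1 h2 (negbTE h3) /= ?mulr1n ?mulr0n.
lra.
Qed.

Lemma graph_caseA (R : realFieldType) n (e : rel 'I_n) : simple_graph e ->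
  P3b e -> P3b (compl_graph e) ->
  (n.+2 <= \rank (Xg R e) + \rank (Xg R (compl_graph e)))%N.
Proof.
move=> se h1 h2.
have [s hs] := negvec R se h1.
have [t ht] := negvec R (compl_simple se) h2.
apply: (rank_caseA (s := s) (t := t)) => //.
- by apply: Xg_sym; case: se.
- by apply: Xg_sym; case: (compl_simple se).
- exact: XY_W.
Qed.

Lemma graph_caseB (R : realFieldType) n (e : rel 'I_n) (q a b : 'I_n) : simple_graph e ->
  (forall j, ~~ e q j) -> e a b ->
  (n.+2 <= \rank (Xg R e) + \rank (Xg R (compl_graph e)))%N.
Proof.
move=> se hq hab.
have P3c : P3b (compl_graph e).
  have [sy irr] := se.
  have naq : a != q by apply: contraTneq hab => ->; rewrite (negbTE (hq b)).
  have nab : a != b by apply: contraTneq hab => ->; rewrite irr.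
  apply/existsP; exists a; apply/existsP; exists q; apply/existsP; exists b.
  rewrite /compl_graph naq sy (hq a) eq_sym.
  have nqb : b != q by apply: contraTneq hab => ->; rewrite sy (negbTE (hq a)).
  by rewrite nqb (hq b) hab nab.
have [t ht] := negvec R (compl_simple se) P3c.
apply: (rank_caseB (q := q) (t := t)) => //.
- by apply: Xg_sym; case: se.
- by apply: Xg_sym; case: (compl_simple se).
- exact: XY_W.
apply/matrixP => i j; rewrite -rowE !mxE (ord1 i) eqxx /=.
have [->|nqj] := eqVneq q j; first by case: se => _ ->; rewrite add0r.
by rewrite (negbTE (hq j)) add0r.
Qed.

Lemma graph_caseC_core (R : realFieldType) n (e : rel 'I_n) (p p' q q' r : 'I_n) :
  simple_graph e -> e p p' -> e q q' ->
  ~~ e p q -> ~~ e p q' -> ~~ e p' q -> ~~ e p' q' ->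
  ~~ e p r -> ~~ e p' r -> ~~ e q r -> ~~ e q' r ->
  (n.+2 <= \rank (Xg R e) + \rank (Xg R (compl_graph e)))%N.
Proof.
move=> se h1 h2 n1 n2 n3 n4 n5 n6 n7 n8.
have [sy irr] := se.
have tpp1 : e p p' = true by exact: h1.
have tp1p : e p' p = true by rewrite sy; exact: h1.
have tqq1 : e q q' = true by exact: h2.
have tq1q : e q' q = true by rewrite sy; exact: h2.
have fpq : e p q = false by exact: negbTE n1.
have fqp : e q p = false by rewrite sy; exact: negbTE n1.
have fpq1 : e p q' = false by exact: negbTE n2.
have fq1p : e q' p = false by rewrite sy; exact: negbTE n2.
have fp1q : e p' q = false by exact: negbTE n3.
have fqp1 : e q p' = false by rewrite sy; exact: negbTE n3.
have fp1q1 : e p' q' = false by exact: negbTE n4.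
have fq1p1 : e q' p' = false by rewrite sy; exact: negbTE n4.
have fpr : e p r = false by exact: negbTE n5.
have frp : e r p = false by rewrite sy; exact: negbTE n5.
have fp1r : e p' r = false by exact: negbTE n6.
have frp1 : e r p' = false by rewrite sy; exact: negbTE n6.
have fqr : e q r = false by exact: negbTE n7.
have frq : e r q = false by rewrite sy; exact: negbTE n7.
have fq1r : e q' r = false by exact: negbTE n8.
have frq1 : e r q' = false by rewrite sy; exact: negbTE n8.
have E := fun i j => XgCE R i j se.
apply: (rank_caseC (v := ev R p + ev R p' - ev R q - ev R q')
                   (w := ev R p + ev R p' - ev R r - ev R r)).
- by apply: Xg_sym; case: se.
- by apply: Xg_sym; case: (compl_simple se).
- exact: XY_W.
- rewrite !bfDl !bfDr !bfNl !bfNr !bf_ev !E !irr ?tpp1 ?tp1p ?tqq1 ?tq1q ?fpq ?fqp ?fpq1 ?fq1p ?fp1q ?fqp1 ?fp1q1 ?fq1p1 ?fpr ?frp ?fp1r ?frp1 ?fqr ?frq ?fq1r ?frq1 /= ?mulr1n ?mulr0n; lra.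
- rewrite !bfDl !bfDr !bfNl !bfNr !bf_ev !E !irr ?tpp1 ?tp1p ?tqq1 ?tq1q ?fpq ?fqp ?fpq1 ?fq1p ?fp1q ?fqp1 ?fp1q1 ?fq1p1 ?fpr ?frp ?fp1r ?frp1 ?fqr ?frq ?fq1r ?frq1 /= ?mulr1n ?mulr0n; lra.
- rewrite !bfDl !bfDr !bfNl !bfNr !bf_ev !E !irr ?tpp1 ?tp1p ?tqq1 ?tq1q ?fpq ?fqp ?fpq1 ?fq1p ?fp1q ?fqp1 ?fp1q1 ?fq1p1 ?fpr ?frp ?fp1r ?frp1 ?fqr ?frq ?fq1r ?frq1 /= ?mulr1n ?mulr0n; lra.
Qed.

Lemma graph_G (R : realFieldType) n (e : rel 'I_n) : simple_graph e ->
  ~~ P3b e -> I3b e -> (exists a b, e a b) ->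
  (n.+2 <= \rank (Xg R e) + \rank (Xg R (compl_graph e)))%N.
Proof.
move=> se hP hI [a [b hab]].
have [sy irr] := se.
have tr := P3free hP.
case: (boolP [exists q, [forall j, ~~ e q j]]).
  case/existsP => q /forallP hq; exact: (graph_caseB R se hq hab).
rewrite negb_exists => /forallP hnb.
have nb : forall x, exists y, e x y.
  move=> x; have := hnb x; rewrite negb_forall => /existsP [y]; rewrite negbK => h.
  by exists y.
case/existsP: hI => p /existsP [q /existsP [r /and4P [npq nqr npr /and3P [epq eqr epr]]]].
have [p' hp'] := nb p; have [q' hq'] := nb q.
have n1 : ~~ e p' q.
  apply/negP => h; move/negP: epq; apply; exact: (tr p p' q).
have n2 : ~~ e p' r.
  apply/negP => h; move/negP: epr; apply; exact: (tr p p' r).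
have n3 : ~~ e p q'.
  apply/negP => h; move/negP: epq; apply; rewrite sy; apply: (tr q q' p) => //.
  by rewrite sy. by rewrite eq_sym.
have n4 : ~~ e q' r.
  apply/negP => h; move/negP: eqr; apply; exact: (tr q q' r).
have npq' : p != q'.
  by apply: contraTneq hq' => <-; rewrite sy.
have n5 : ~~ e p' q'.
  apply/negP => h; move/negP: epq; apply.
  have epq' : e p q' by apply: (tr p p' q').
  by apply: (tr p q' q) => //; rewrite sy.
exact: (graph_caseC_core R se hp' hq' epq n3 n1 n5 epr n2 eqr n4).
Qed.

Lemma iso_compl n (e F : rel 'I_n) : simple_graph e ->
  graph_iso (compl_graph e) F -> graph_iso e (compl_graph F).
Proof.
move=> se [s hs]; exists s => x y.
by rewrite -(compl_compl se x y) {1}/compl_graph hs /compl_graph (inj_eq perm_inj).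
Qed.

Lemma iso_ext n (e F G : rel 'I_n) : graph_iso e F -> F =2 G -> graph_iso e G.
Proof. by move=> [s hs] FG; exists s => x y; rewrite hs FG. Qed.

Lemma edge_or_empty n (e : rel 'I_n) :
  (exists a b, e a b) \/ graph_iso e (empty_graph n).
Proof.
case: (boolP [exists a, [exists b, e a b]]).
  by case/existsP => a /existsP [b h]; left; exists a, b.
rewrite negb_exists => /forallP h; right; exists 1%g => x y.
by move: (h x); rewrite negb_exists => /forallP /(_ y) /negbTE.
Qed.

Theorem theorem4p3 (R : realFieldType) (n : nat) (e : rel 'I_n) :
  simple_graph e ->
  ~ graph_iso e (complete_graph n) ->
  ~ graph_iso e (empty_graph n) ->
  (forall a : nat, (1 <= a <= n./2)%N ->
     ~ graph_iso e (complete_bipartite n a) /\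
     ~ graph_iso e (compl_graph (complete_bipartite n a))) ->
  (3 * n.-1 <= \rank ((adj_mx R e + 1%:M)%R) * \rank ((adj_mx R (compl_graph e) + 1%:M)%R))%N.
Proof.
move=> se hK hE hB.
have sc := compl_simple se.
have bips : forall a, simple_graph (complete_bipartite n a).
  by move=> a; split => [x y|x]; rewrite /complete_bipartite ?eqxx // eq_sym.
have nL : P3b e || I3b e.
  apply/negPn/negP => /norP [h1 h2]; case: (lemmaL se h1 h2) => [h|[a [ha h]]].
    exact: hK h.
  exact: (proj2 (hB a ha)) h.
have nLc : P3b (compl_graph e) || I3b (compl_graph e).
  apply/negPn/negP => /norP [h1 h2]; case: (lemmaL sc h1 h2) => [h|[a [ha h]]].
    apply: hE; apply: (iso_ext (iso_compl se h)) => x y.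
    by rewrite /compl_graph /complete_graph /empty_graph andbN.
  apply: (proj1 (hB a ha)); apply: (iso_ext (iso_compl se h)) => x y.
  exact: compl_compl.
have r3 := rank3 R se nL.
have s3 := rank3 R sc nLc.
have f2 : (n.+2 <= \rank (Xg R e) + \rank (Xg R (compl_graph e)))%N.
  have Ge : ~~ P3b e -> (n.+2 <= \rank (Xg R e) + \rank (Xg R (compl_graph e)))%N.
    move=> h1; apply: (graph_G R se h1).
      by move: nL; rewrite (negbTE h1).
    by case: (edge_or_empty e) => // h; case: (hE h).
  have Gc : ~~ P3b (compl_graph e) ->
      (n.+2 <= \rank (Xg R e) + \rank (Xg R (compl_graph e)))%N.
    move=> h2; rewrite addnC -[X in (_ <= _ + \rank X)%N](Xg_compl2 R se).
    apply: (graph_G R sc h2).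
      by move: nLc; rewrite (negbTE h2).
    case: (edge_or_empty (compl_graph e)) => // h.
    case: hK; apply: (iso_ext (iso_compl se h)) => x y.
    by rewrite /compl_graph /empty_graph /complete_graph andbT.
  case: (boolP (P3b e)) => h1; last exact: Ge.
  case: (boolP (P3b (compl_graph e))) => h2; last exact: Gc.
  exact: graph_caseA.
move: r3 s3 f2; rewrite /Xg.
set r := \rank _; set s := \rank _ => r3 s3 f2.
rewrite -subn1; nia.
Qed.
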